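(* Let $K\subset\mathbb{R}^m$ be a proper cone which is an $\mathbb{R}^m_+$-isotone projection set. Then exactly one of the following alternatives holds: (1) $K\subset\mathbb{R}^m_+$; (2) $\operatorname{int}(K^* )\cap\mathbb{R}^m_+=\varnothing$.
   Context: $\mathbb{R}^m$ carries the standard inner product and a Cartesian coordinate system; $\mathbb{R}^m_+=\{x:x^i\ge0,\ i=1,\dots,m\}$ and $x\le_{\mathbb{R}^m_+}y$ means $x^i\le y^i$ for all $i$. A proper cone is a closed convex cone that is pointed ($K\cap(-K)=\{0\}$) and generating ($K-K=\mathbb{R}^m$). $K^*=\{y:\langle x,y\rangle\ge0\ \forall x\in K\}$. $K$ is an $\mathbb{R}^m_+$-isotone projection set if $x\le_{\mathbb{R}^m_+}y$ implies $P_Kx\le_{\mathbb{R}^m_+}P_Ky$, where $P_K$ is the metric projection onto $K$. *)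

(* Defs.v *)
From HB Require Import structures.
From mathcomp Require Import all_boot all_order all_algebra.
From mathcomp Require Import all_classical all_reals all_analysis.
Set Implicit Arguments. Unset Strict Implicit. Unset Printing Implicit Defensive.
Import Order.TTheory GRing.Theory Num.Theory.
Import numFieldNormedType.Exports.
Local Open Scope classical_set_scope.
Local Open Scope ring_scope.

Section Defs.
Context {R : realType} {m : nat}.
Implicit Types (x y z p : 'rV[R]_m) (K : set 'rV[R]_m).

Definition dotv x y : R := \sum_(i < m) x ord0 i * y ord0 i.

Definition orthant : set 'rV[R]_m := [set x | forall i, 0 <= x ord0 i].

Definition le_orth x y : Prop := forall i, x ord0 i <= y ord0 i.

Definition convex_cone K : Prop :=
  K 0 /\ (forall x y, K x -> K y -> K (x + y)) /\
  (forall (a : R) x, 0 <= a -> K x -> K (a *: x)).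

Definition pointed K : Prop := forall x, K x -> K (- x) -> x = 0.

Definition generating K : Prop := forall z, exists x y, K x /\ K y /\ z = x - y.

Definition proper_cone K : Prop :=
  closed K /\ convex_cone K /\ pointed K /\ generating K.

Definition dual_cone K : set 'rV[R]_m := [set y | forall x, K x -> 0 <= dotv x y].

Definition is_metric_proj K x p : Prop :=
  K p /\ forall z, K z -> dotv (x - p) (x - p) <= dotv (x - z) (x - z).

Definition isotone_projection_set K : Prop :=
  forall x y px py, le_orth x y -> is_metric_proj K x px ->
    is_metric_proj K y py -> le_orth px py.

End Defs.

(* Main.v *)
Require Import Defs.
From HB Require Import structures.
From mathcomp Require Import all_boot all_order all_algebra.
From mathcomp Require Import all_classical all_reals all_analysis.
From mathcomp Require Import ring.
From Stdlib Require Classical_Prop.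
Import Order.TTheory GRing.Theory Num.Theory.
Import numFieldNormedType.Exports.
Local Open Scope classical_set_scope.
Local Open Scope ring_scope.

Lemma ball_entry (R : realType) (m : nat) (x y : 'rV[R]_m) e :
  ball x e y -> forall i, `|x ord0 i - y ord0 i| < e.
Proof. by case=> _ H i; have := H ord0 i. Qed.

Lemma entry_ball (R : realType) (m : nat) (x y : 'rV[R]_m) e : 0 < e ->
  (forall i, `|x ord0 i - y ord0 i| < e) -> ball x e y.
Proof. move=> e0 H; split => // i j; rewrite (ord1 i); exact: H. Qed.

Lemma proj0 (R : realType) (m : nat) (K : set 'rV[R]_m) z :
  K 0 -> dual_cone K z -> is_metric_proj K (- z) 0.
Proof.
move=> K0 Dz; split => // k Kk.
have := Dz k Kk; rewrite /dotv => h.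
have E : \sum_(i < m) (- z - k) ord0 i * (- z - k) ord0 i =
  \sum_(i < m) (- z - 0) ord0 i * (- z - 0) ord0 i +
  2 * \sum_(i < m) k ord0 i * z ord0 i + \sum_(i < m) k ord0 i * k ord0 i.
  rewrite mulr_sumr -!big_split; apply: eq_bigr => i _; rewrite ?subr0 !mxE /=; ring.
rewrite E -addrA lerDl addr_ge0 // ?mulr_ge0 //.
by apply: sumr_ge0 => i _; rewrite -expr2 sqr_ge0.
Qed.

Theorem corollary3 (R : realType) (m : nat) (K : set 'rV[R]_m) :
  proper_cone K -> isotone_projection_set K ->
  let A1 := K `<=` orthant in
  let A2 := interior (dual_cone K) `&` orthant = set0 in
  (A1 \/ A2) /\ ~ (A1 /\ A2).
Proof.
move=> [_ [[K0 [KD KZ]] _]] iso A1 A2; split; last first.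
  move=> [h1 h2].
  have : (interior (dual_cone K) `&` orthant) (const_mx 1 : 'rV[R]_m).
    split; last by move=> i; rewrite mxE.
    apply/nbhs_ballP; exists 1 => //= y /ball_entry By x Kx.
    apply: sumr_ge0 => i _; apply: mulr_ge0; first exact: h1.
    have := By i; rewrite mxE => h.
    have : 1 - y ord0 i < 1 by apply: le_lt_trans h; exact: ler_norm.
    by move=> /ltW; rewrite lerBlDr lerDl.
  by rewrite h2.
have [H|H] := EM A2; [by right|left].
have [y [Iy Oy]] : exists y, (interior (dual_cone K) `&` orthant) y.
  apply: Classical_Prop.NNPP => nE; apply: H; apply/seteqP; split => // y Hy; apply: nE; by exists y.
move/nbhs_ballP: Iy => [e e0 Be].
set z : 'rV[R]_m := y + const_mx (e / 2).
have e20 : 0 < e / 2 by rewrite divr_gt0.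
have Dz : dual_cone K z.
  apply: Be; apply: entry_ball => // i; rewrite !mxE opprD addNKr normrN.
  by rewrite gtr0_norm // ltr_pdivrMr // ltr_pMr // ltr1n.
have zge i : e / 2 <= z ord0 i by rewrite !mxE lerDr; exact: Oy.
move=> x Kx.
set s := \sum_(j < m) `|x ord0 j|.
set t := s / (e / 2).
have t0 : 0 <= t by rewrite divr_ge0 // ?sumr_ge0 // ltW.
have Dtz : dual_cone K (t *: z).
  move=> k Kk; rewrite /dotv; under eq_bigr do rewrite mxE mulrCA.
  by rewrite -mulr_sumr mulr_ge0 //; exact: Dz.
have P0 := @proj0 _ _ K _ K0 Dtz.
have Px : is_metric_proj K x x.
  split => // w _; rewrite subrr /dotv big1 ?sumr_ge0 // => i _.
    by rewrite -expr2 sqr_ge0.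
  by rewrite mxE mulr0.
have Le : le_orth (- (t *: z)) x.
  move=> i; rewrite !mxE lerNl.
  have hs : `|x ord0 i| <= s.
    by rewrite /s (bigD1 i) //= lerDl sumr_ge0.
  have : s <= t * z ord0 i.
    apply: le_trans (ler_wpM2l t0 (zge i)).
    by rewrite /t mulfVK // lt0r_neq0.
  move=> h.
  have hn : - x ord0 i <= `|x ord0 i| by rewrite -normrN ler_norm.
  rewrite /z !mxE in h.
  exact: le_trans (le_trans hn hs) h.
have := iso _ _ _ _ Le P0 Px => h i; have := h i; by rewrite mxE.
Qed.
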